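(* For positive reals $a,b>0$ define the means \[ H=\frac{2ab}{a+b},\quad G=\sqrt{ab},\quad A=\frac{a+b}{2},\quad S=\sqrt{\frac{a^2+b^2}{2}}, \] \[ N_1=\Big(\frac{\sqrt a+\sqrt b}{2}\Big)^2,\quad N_2=\Big(\frac{\sqrt a+\sqrt b}{2}\Big)\sqrt{\frac{a+b}{2}},\quad N_3=\frac{a+\sqrt{ab}+b}{3}, \] \[ P_1=\frac{ab(a^2+b^2)}{a^3+b^3},\quad P_2=\frac{ab(a+b)}{a^2+b^2},\quad P_3=\frac{ab(\sqrt a+\sqrt b)}{a^{3/2}+b^{3/2}},\quad P_4=\frac{4ab}{(\sqrt a+\sqrt b)^2}, \] \[ P_5=\Big(\frac{a+b}{\sqrt a+\sqrt b}\Big)^2,\quad P_6=\frac{a^2+b^2}{a+b}, \] all evaluated at $(a,b)$, and for two such means $X,Y$ let $D_{XY}(a,b)=X(a,b)-Y(a,b)$. Then for all $a,b>0$ the following inequalities hold (all $D$'s evaluated at $(a,b)$). (1) $\tfrac18 D_{P_6P_1}\le \tfrac16 D_{P_6P_2}\le D_{SA}\le \tfrac13 D_{SH}\le \tfrac12 D_{AH}$; $\tfrac12 D_{AH}\le \tfrac49 D_{P_6N_2}\le \tfrac13 D_{P_6G}$; $\tfrac12 D_{AH}\le \tfrac37 D_{P_6N_3}$ and $\tfrac12 D_{AH}\le \tfrac25 D_{SP_4}$; each of $\tfrac37 D_{P_6N_3}$ and $\tfrac25 D_{SP_4}$ is $\le \tfrac25 D_{P_6N_1}$ and $\le \tfrac27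 D_{P_6P_4}$; $\tfrac25 D_{P_6N_1}\le \tfrac13 D_{P_6G}$ and $\tfrac27 D_{P_6P_4}\le\tfrac13 D_{P_6G}$; $\tfrac13 D_{P_6G}\le \tfrac25 D_{P_5H}\le 4D_{N_2N_1}$ and $\tfrac13 D_{P_6G}\le \tfrac23 D_{AP_4}\le 4D_{N_2N_1}$; $4D_{N_2N_1}\le \tfrac43 D_{N_2G}\le D_{AG}\le 4D_{AN_2}\le \tfrac23 D_{P_5G}\le D_{P_5N_1}\le \tfrac65 D_{P_5N_3}\le \tfrac43 D_{P_5N_2}\le 2D_{P_5A}$. (2) $D_{SA}\le \tfrac45 D_{SN_2}\le \tfrac23 D_{SN_1}$ and $D_{SA}\le \tfrac34 D_{SN_3}\le \tfrac23 D_{SN_1}$; $\tfrac23 D_{SN_1}\le \tfrac13 D_{P_6G}\le \tfrac25 D_{P_5H}$ and $\tfrac23 D_{SN_1}\le \tfrac12 D_{SG}\le \tfrac25 D_{P_5H}$. (3) each of $\tfrac18 D_{P_6P_1}$ and $\tfrac{2}{13}D_{P_5P_1}$ is $\le \tfrac16 D_{P_6P_2}$ and $\le \tfrac29 D_{P_5P_2}$; $\tfrac16 D_{P_6P_2}\le \tfrac27 D_{P_5P_3}$ and $\tfrac29 D_{P_5P_2}\le \tfrac27 D_{P_5P_3}$; $\tfrac27 D_{P_5P_3}\le \tfrac49 D_{P_6N_2}\le D_{P_6S}\le D_{AG}$.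
   Context: $H,G,A,S$ are the harmonic, geometric, arithmetic and root-mean-square means; $N_3$ is Heron's mean; $P_1,P_2,P_3,P_6$ are the Lehmer means $K_r(a,b)=\frac{a^r+b^r}{a^{r-1}+b^{r-1}}$ for $r=-2,-1,-1/2,2$; $P_4$ is the power mean of order $-1/2$; $N_1$ is the power mean of order $1/2$; $P_5$ is the Gini mean $E_{1/2,1}(a,b)=\big(\frac{a^{1/2}+b^{1/2}}{a+b}\big)^{-2}$. For means $X,Y$, $D_{XY}=X-Y$ (e.g. $D_{SA}=S-A$, $D_{P_6P_1}=P_6-P_1$). *)

(* Defs.v *)
From Stdlib Require Import Reals.
Open Scope R_scope.

Definition mH (a b : R) : R := 2 * a * b / (a + b).
Definition mG (a b : R) : R := sqrt (a * b).
Definition mA (a b : R) : R := (a + b) / 2.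
Definition mS (a b : R) : R := sqrt ((a ^ 2 + b ^ 2) / 2).
Definition mN1 (a b : R) : R := ((sqrt a + sqrt b) / 2) ^ 2.
Definition mN2 (a b : R) : R := ((sqrt a + sqrt b) / 2) * sqrt ((a + b) / 2).
Definition mN3 (a b : R) : R := (a + sqrt (a * b) + b) / 3.
Definition mP1 (a b : R) : R := a * b * (a ^ 2 + b ^ 2) / (a ^ 3 + b ^ 3).
Definition mP2 (a b : R) : R := a * b * (a + b) / (a ^ 2 + b ^ 2).
(* a^{3/2} = Rpower a (3/2) for a > 0 *)
Definition mP3 (a b : R) : R :=
  a * b * (sqrt a + sqrt b) / (Rpower a (3/2) + Rpower b (3/2)).
Definition mP4 (a b : R) : R := 4 * a * b / (sqrt a + sqrt b) ^ 2.
Definition mP5 (a b : R) : R := ((a + b) / (sqrt a + sqrt b)) ^ 2.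
Definition mP6 (a b : R) : R := (a ^ 2 + b ^ 2) / (a + b).

Definition D (X Y : R -> R -> R) (a b : R) : R := X a b - Y a b.

(* Main.v *)
Require Import Defs.
From Stdlib Require Import Reals Lra Psatz.
Open Scope R_scope.

Definition hH (x y : R) : R := 2*x^2*y^2/(x^2+y^2).
Definition hG (x y : R) : R := x*y.
Definition hA (x y : R) : R := (x^2+y^2)/2.
Definition hS (x y : R) : R := sqrt ((x^4+y^4)/2).
Definition hN1 (x y : R) : R := ((x+y)/2)^2.
Definition hN2 (x y : R) : R := (x+y)/2 * sqrt ((x^2+y^2)/2).
Definition hN3 (x y : R) : R := (x^2+x*y+y^2)/3.
Definition hP1 (x y : R) : R := x^2*y^2*(x^4+y^4)/(x^6+y^6).
Definition hP2 (x y : R) : R := x^2*y^2*(x^2+y^2)/(x^4+y^4).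
Definition hP3 (x y : R) : R := x^2*y^2*(x+y)/(x^3+y^3).
Definition hP4 (x y : R) : R := 4*x^2*y^2/(x+y)^2.
Definition hP5 (x y : R) : R := ((x^2+y^2)/(x+y))^2.
Definition hP6 (x y : R) : R := (x^4+y^4)/(x^2+y^2).

Lemma top (l r E : R) : r - l = E -> 0 <= E -> l <= r.
Proof. intros; lra. Qed.
Lemma keyP (F N Den : R) : 0 < Den -> F * Den = N -> 0 <= N -> 0 <= F.
Proof.
  intros hD hE hN. destruct (Rle_or_lt 0 F) as [h|h]; auto.
  exfalso. assert (F * Den < 0) by (apply Rmult_neg_pos; auto). lra.
Qed.
Lemma radC (s e0 e1 : R) : 0 <= s -> 0 <= e0 -> 0 <= e1 -> 0 <= e0 + e1*s.
Proof. intros; nra. Qed.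
Lemma radA (s R0 e0 e1 W : R) : 0 <= s -> s*s = R0 -> 0 <= e1 ->
  e1*e1*R0 - e0*e0 = W -> 0 <= W -> 0 <= e0 + e1*s.
Proof.
  intros h0 h1 h2 h3 h4. assert (0 <= e1*s) by nra.
  assert ((e1*s)*(e1*s) >= e0*e0) by (rewrite <- h1 in h3; nra). nra.
Qed.
Lemma radB (s R0 e0 e1 W : R) : 0 <= s -> s*s = R0 -> 0 <= e0 ->
  e0*e0 - e1*e1*R0 = W -> 0 <= W -> 0 <= e0 - e1*s.
Proof.
  intros h0 h1 h2 h3 h4.
  assert ((e1*s)*(e1*s) <= e0*e0) by (rewrite <- h1 in h3; nra). nra.
Qed.

Ltac ppos := repeat (apply Rmult_lt_0_compat || apply Rplus_lt_0_compat); try apply pow_lt; lra.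
Ltac qpos := repeat (apply Rplus_le_le_0_compat || apply Rmult_le_pos); try apply pow_le; lra.
Ltac npos := first [ apply Rmult_le_pos; [apply pow_le; apply pow2_ge_0 | qpos] | qpos ].
Ltac field_tac := field; repeat split; try (apply Rgt_not_eq; ppos).

Ltac prep x y :=
  unfold D, hH, hG, hA, hS, hN1, hN2, hN3, hP1, hP2, hP3, hP4, hP5, hP6;
  set (s := sqrt ((x^4+y^4)/2));
  set (n := sqrt ((x^2+y^2)/2));
  assert (hs : 0 <= s) by apply sqrt_pos;
  assert (hn : 0 <= n) by apply sqrt_pos;
  assert (hs2 : s*s = (x^4+y^4)/2) by (apply sqrt_sqrt; apply Rlt_le; ppos);
  assert (hn2 : n*n = (x^2+y^2)/2) by (apply sqrt_sqrt; apply Rlt_le; ppos);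
  clearbody s n.
Lemma L0 (x y : R) (hx : 0 < x) (hy : 0 < y) : 1/8 * D hP6 hP1 x y <= 1/6 * D hP6 hP2 x y.
Proof.
  prep x y.
  apply (top _ _ (((1/24)*x^14 - (1/24)*x^12*y^2 - (1/8)*x^10*y^4 + (1/8)*x^8*y^6 + (1/8)*x^6*y^8 - (1/8)*x^4*y^10 - (1/24)*x^2*y^12 + (1/24)*y^14)/((x^2+y^2)*(x^4+y^4)*(x^6+y^6)))); [field_tac|].
  apply (keyP (((1/24)*x^14 - (1/24)*x^12*y^2 - (1/8)*x^10*y^4 + (1/8)*x^8*y^6 + (1/8)*x^6*y^8 - (1/8)*x^4*y^10 - (1/24)*x^2*y^12 + (1/24)*y^14)/((x^2+y^2)*(x^4+y^4)*(x^6+y^6))) (((x-y)^2)^2*(x^10 + 4*x^9*y + 9*x^8*y^2 + 16*x^7*y^3 + 22*x^6*y^4 + 24*x^5*y^5 + 22*x^4*y^6 + 16*x^3*y^7 + 9*x^2*y^8 + 4*x*y^9 + y^10)) (24*(x^2+y^2)*(x^4+y^4)*(x^6+y^6))); [ppos | field_tac | npos].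
Qed.

Lemma L1 (x y : R) (hx : 0 < x) (hy : 0 < y) : 1/6 * D hP6 hP2 x y <= D hS hA x y.
Proof.
  prep x y.
  apply (top _ _ (((-(2/3)*x^8 - (5/6)*x^6*y^2 - x^4*y^4 - (5/6)*x^2*y^6 - (2/3)*y^8)/((x^2+y^2)*(x^4+y^4))) + (1)*s)); [field_tac|].
  apply (radA s ((x^4+y^4)/2) ((-(2/3)*x^8 - (5/6)*x^6*y^2 - x^4*y^4 - (5/6)*x^2*y^6 - (2/3)*y^8)/((x^2+y^2)*(x^4+y^4))) (1) (((1/18)*x^16 - (1/9)*x^14*y^2 - (1/36)*x^12*y^4 + (2/9)*x^10*y^6 - (5/18)*x^8*y^8 + (2/9)*x^6*y^10 - (1/36)*x^4*y^12 - (1/9)*x^2*y^14 + (1/18)*y^16)/((x^2+y^2)*(x^2+y^2)*(x^4+y^4)*(x^4+y^4)))); [exact hs | exact hs2 | | field_tac |].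
   {
  apply (keyP (1) ((1)) (1)); [ppos | field_tac | npos].
   }
   {
  apply (keyP (((1/18)*x^16 - (1/9)*x^14*y^2 - (1/36)*x^12*y^4 + (2/9)*x^10*y^6 - (5/18)*x^8*y^8 + (2/9)*x^6*y^10 - (1/36)*x^4*y^12 - (1/9)*x^2*y^14 + (1/18)*y^16)/((x^2+y^2)*(x^2+y^2)*(x^4+y^4)*(x^4+y^4))) (((x-y)^2)^2*(2*x^12 + 8*x^11*y + 16*x^10*y^2 + 24*x^9*y^3 + 29*x^8*y^4 + 28*x^7*y^5 + 26*x^6*y^6 + 28*x^5*y^7 + 29*x^4*y^8 + 24*x^3*y^9 + 16*x^2*y^10 + 8*x*y^11 + 2*y^12)) (36*(x^2+y^2)*(x^2+y^2)*(x^4+y^4)*(x^4+y^4))); [ppos | field_tac | npos].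
   }
Qed.

Lemma L2 (x y : R) (hx : 0 < x) (hy : 0 < y) : D hS hA x y <= 1/3 * D hS hH x y.
Proof.
  prep x y.
  apply (top _ _ ((((1/2)*x^4 + (1/3)*x^2*y^2 + (1/2)*y^4)/((x^2+y^2))) - ((2/3))*s)); [field_tac|].
  apply (radB s ((x^4+y^4)/2) (((1/2)*x^4 + (1/3)*x^2*y^2 + (1/2)*y^4)/((x^2+y^2))) ((2/3)) (((1/36)*x^8 - (1/9)*x^6*y^2 + (1/6)*x^4*y^4 - (1/9)*x^2*y^6 + (1/36)*y^8)/((x^2+y^2)*(x^2+y^2)))); [exact hs | exact hs2 | | field_tac |].
   {
  apply (keyP (((1/2)*x^4 + (1/3)*x^2*y^2 + (1/2)*y^4)/((x^2+y^2))) ((3*x^4 + 2*x^2*y^2 + 3*y^4)) (6*(x^2+y^2))); [ppos | field_tac | npos].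
   }
   {
  apply (keyP (((1/36)*x^8 - (1/9)*x^6*y^2 + (1/6)*x^4*y^4 - (1/9)*x^2*y^6 + (1/36)*y^8)/((x^2+y^2)*(x^2+y^2))) (((x-y)^2)^2*(x^4 + 4*x^3*y + 6*x^2*y^2 + 4*x*y^3 + y^4)) (36*(x^2+y^2)*(x^2+y^2))); [ppos | field_tac | npos].
   }
Qed.

Lemma L3 (x y : R) (hx : 0 < x) (hy : 0 < y) : 1/3 * D hS hH x y <= 1/2 * D hA hH x y.
Proof.
  prep x y.
  apply (top _ _ ((((1/4)*x^4 + (1/6)*x^2*y^2 + (1/4)*y^4)/((x^2+y^2))) - ((1/3))*s)); [field_tac|].
  apply (radB s ((x^4+y^4)/2) (((1/4)*x^4 + (1/6)*x^2*y^2 + (1/4)*y^4)/((x^2+y^2))) ((1/3)) (((1/144)*x^8 - (1/36)*x^6*y^2 + (1/24)*x^4*y^4 - (1/36)*x^2*y^6 + (1/144)*y^8)/((x^2+y^2)*(x^2+y^2)))); [exact hs | exact hs2 | | field_tac |].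
   {
  apply (keyP (((1/4)*x^4 + (1/6)*x^2*y^2 + (1/4)*y^4)/((x^2+y^2))) ((3*x^4 + 2*x^2*y^2 + 3*y^4)) (12*(x^2+y^2))); [ppos | field_tac | npos].
   }
   {
  apply (keyP (((1/144)*x^8 - (1/36)*x^6*y^2 + (1/24)*x^4*y^4 - (1/36)*x^2*y^6 + (1/144)*y^8)/((x^2+y^2)*(x^2+y^2))) (((x-y)^2)^2*(x^4 + 4*x^3*y + 6*x^2*y^2 + 4*x*y^3 + y^4)) (144*(x^2+y^2)*(x^2+y^2))); [ppos | field_tac | npos].
   }
Qed.

Lemma L4 (x y : R) (hx : 0 < x) (hy : 0 < y) : 1/2 * D hA hH x y <= 4/9 * D hP6 hN2 x y.
Proof.
  prep x y.
  apply (top _ _ ((((7/36)*x^4 + (1/2)*x^2*y^2 + (7/36)*y^4)/((x^2+y^2))) - ((2/9)*x + (2/9)*y)*n)); [field_tac|].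
  apply (radB n ((x^2+y^2)/2) (((7/36)*x^4 + (1/2)*x^2*y^2 + (7/36)*y^4)/((x^2+y^2))) ((2/9)*x + (2/9)*y) (((17/1296)*x^8 - (4/81)*x^7*y + (31/324)*x^6*y^2 - (4/27)*x^5*y^3 + (115/648)*x^4*y^4 - (4/27)*x^3*y^5 + (31/324)*x^2*y^6 - (4/81)*x*y^7 + (17/1296)*y^8)/((x^2+y^2)*(x^2+y^2)))); [exact hn | exact hn2 | | field_tac |].
   {
  apply (keyP (((7/36)*x^4 + (1/2)*x^2*y^2 + (7/36)*y^4)/((x^2+y^2))) ((7*x^4 + 18*x^2*y^2 + 7*y^4)) (36*(x^2+y^2))); [ppos | field_tac | npos].
   }
   {
  apply (keyP (((17/1296)*x^8 - (4/81)*x^7*y + (31/324)*x^6*y^2 - (4/27)*x^5*y^3 + (115/648)*x^4*y^4 - (4/27)*x^3*y^5 + (31/324)*x^2*y^6 - (4/81)*x*y^7 + (17/1296)*y^8)/((x^2+y^2)*(x^2+y^2))) (((x-y)^2)^2*(17*x^4 + 4*x^3*y + 38*x^2*y^2 + 4*x*y^3 + 17*y^4)) (1296*(x^2+y^2)*(x^2+y^2))); [ppos | field_tac | npos].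
   }
Qed.

Lemma L5 (x y : R) (hx : 0 < x) (hy : 0 < y) : 4/9 * D hP6 hN2 x y <= 1/3 * D hP6 hG x y.
Proof.
  prep x y.
  apply (top _ _ (((-(1/9)*x^4 - (1/3)*x^3*y - (1/3)*x*y^3 - (1/9)*y^4)/((x^2+y^2))) + ((2/9)*x + (2/9)*y)*n)); [field_tac|].
  apply (radA n ((x^2+y^2)/2) ((-(1/9)*x^4 - (1/3)*x^3*y - (1/3)*x*y^3 - (1/9)*y^4)/((x^2+y^2))) ((2/9)*x + (2/9)*y) (((1/81)*x^8 - (2/81)*x^7*y - (1/81)*x^6*y^2 + (2/27)*x^5*y^3 - (8/81)*x^4*y^4 + (2/27)*x^3*y^5 - (1/81)*x^2*y^6 - (2/81)*x*y^7 + (1/81)*y^8)/((x^2+y^2)*(x^2+y^2)))); [exact hn | exact hn2 | | field_tac |].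
   {
  apply (keyP ((2/9)*x + (2/9)*y) ((x + y)) ((9/2))); [ppos | field_tac | npos].
   }
   {
  apply (keyP (((1/81)*x^8 - (2/81)*x^7*y - (1/81)*x^6*y^2 + (2/27)*x^5*y^3 - (8/81)*x^4*y^4 + (2/27)*x^3*y^5 - (1/81)*x^2*y^6 - (2/81)*x*y^7 + (1/81)*y^8)/((x^2+y^2)*(x^2+y^2))) (((x-y)^2)^2*(x^4 + 2*x^3*y + x^2*y^2 + 2*x*y^3 + y^4)) (81*(x^2+y^2)*(x^2+y^2))); [ppos | field_tac | npos].
   }
Qed.

Lemma L6 (x y : R) (hx : 0 < x) (hy : 0 < y) : 1/2 * D hA hH x y <= 3/7 * D hP6 hN3 x y.
Proof.
  prep x y.
  apply (top _ _ (((1/28)*x^4 - (1/7)*x^3*y + (3/14)*x^2*y^2 - (1/7)*x*y^3 + (1/28)*y^4)/((x^2+y^2)))); [field_tac|].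
  apply (keyP (((1/28)*x^4 - (1/7)*x^3*y + (3/14)*x^2*y^2 - (1/7)*x*y^3 + (1/28)*y^4)/((x^2+y^2))) (((x-y)^2)^2*(1)) (28*(x^2+y^2))); [ppos | field_tac | npos].
Qed.

Lemma L7 (x y : R) (hx : 0 < x) (hy : 0 < y) : 1/2 * D hA hH x y <= 2/5 * D hS hP4 x y.
Proof.
  prep x y.
  apply (top _ _ (((-(1/4)*x^6 - (1/2)*x^5*y - (27/20)*x^4*y^2 + x^3*y^3 - (27/20)*x^2*y^4 - (1/2)*x*y^5 - (1/4)*y^6)/((x+y)*(x+y)*(x^2+y^2))) + ((2/5))*s)); [field_tac|].
  apply (radA s ((x^4+y^4)/2) ((-(1/4)*x^6 - (1/2)*x^5*y - (27/20)*x^4*y^2 + x^3*y^3 - (27/20)*x^2*y^4 - (1/2)*x*y^5 - (1/4)*y^6)/((x+y)*(x+y)*(x^2+y^2))) ((2/5)) (((7/400)*x^12 + (7/100)*x^11*y - (57/200)*x^10*y^2 + (11/100)*x^9*y^3 - (119/400)*x^8*y^4 + (119/50)*x^7*y^5 - (399/100)*x^6*y^6 + (119/50)*x^5*y^7 - (119/400)*x^4*y^8 + (11/100)*x^3*y^9 - (57/200)*x^2*y^10 + (7/100)*x*y^11 + (7/400)*y^12)/((x+y)*(x+y)*(x+y)*(x+y)*(x^2+y^2)*(x^2+y^2)))); [exact hs | exact hs2 | | field_tac |].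
   {
  apply (keyP ((2/5)) ((1)) ((5/2))); [ppos | field_tac | npos].
   }
   {
  apply (keyP (((7/400)*x^12 + (7/100)*x^11*y - (57/200)*x^10*y^2 + (11/100)*x^9*y^3 - (119/400)*x^8*y^4 + (119/50)*x^7*y^5 - (399/100)*x^6*y^6 + (119/50)*x^5*y^7 - (119/400)*x^4*y^8 + (11/100)*x^3*y^9 - (57/200)*x^2*y^10 + (7/100)*x*y^11 + (7/400)*y^12)/((x+y)*(x+y)*(x+y)*(x+y)*(x^2+y^2)*(x^2+y^2))) (((x-y)^2)^3*(7*x^6 + 70*x^5*y + 201*x^4*y^2 + 340*x^3*y^3 + 201*x^2*y^4 + 70*x*y^5 + 7*y^6)) (400*(x+y)*(x+y)*(x+y)*(x+y)*(x^2+y^2)*(x^2+y^2))); [ppos | field_tac | npos].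
   }
Qed.

Lemma L8 (x y : R) (hx : 0 < x) (hy : 0 < y) : 3/7 * D hP6 hN3 x y <= 2/5 * D hP6 hN1 x y.
Proof.
  prep x y.
  apply (top _ _ (((1/70)*x^4 - (2/35)*x^3*y + (3/35)*x^2*y^2 - (2/35)*x*y^3 + (1/70)*y^4)/((x^2+y^2)))); [field_tac|].
  apply (keyP (((1/70)*x^4 - (2/35)*x^3*y + (3/35)*x^2*y^2 - (2/35)*x*y^3 + (1/70)*y^4)/((x^2+y^2))) (((x-y)^2)^2*(1)) (70*(x^2+y^2))); [ppos | field_tac | npos].
Qed.

Lemma L9 (x y : R) (hx : 0 < x) (hy : 0 < y) : 3/7 * D hP6 hN3 x y <= 2/7 * D hP6 hP4 x y.
Proof.
  prep x y.
  apply (top _ _ (((1/7)*x^5*y - (4/7)*x^4*y^2 + (6/7)*x^3*y^3 - (4/7)*x^2*y^4 + (1/7)*x*y^5)/((x+y)*(x+y)*(x^2+y^2)))); [field_tac|].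
  apply (keyP (((1/7)*x^5*y - (4/7)*x^4*y^2 + (6/7)*x^3*y^3 - (4/7)*x^2*y^4 + (1/7)*x*y^5)/((x+y)*(x+y)*(x^2+y^2))) (((x-y)^2)^2*(x*y)) (7*(x+y)*(x+y)*(x^2+y^2))); [ppos | field_tac | npos].
Qed.

Lemma L10 (x y : R) (hx : 0 < x) (hy : 0 < y) : 2/5 * D hS hP4 x y <= 2/5 * D hP6 hN1 x y.
Proof.
  prep x y.
  apply (top _ _ ((((3/10)*x^6 + (2/5)*x^5*y + (13/10)*x^4*y^2 - (4/5)*x^3*y^3 + (13/10)*x^2*y^4 + (2/5)*x*y^5 + (3/10)*y^6)/((x+y)*(x+y)*(x^2+y^2))) - ((2/5))*s)); [field_tac|].
  apply (radB s ((x^4+y^4)/2) (((3/10)*x^6 + (2/5)*x^5*y + (13/10)*x^4*y^2 - (4/5)*x^3*y^3 + (13/10)*x^2*y^4 + (2/5)*x*y^5 + (3/10)*y^6)/((x+y)*(x+y)*(x^2+y^2))) ((2/5)) (((1/100)*x^12 - (2/25)*x^11*y + (3/10)*x^10*y^2 - (2/5)*x^9*y^3 + (63/100)*x^8*y^4 - (52/25)*x^7*y^5 + (81/25)*x^6*y^6 - (52/25)*x^5*y^7 + (63/100)*x^4*y^8 - (2/5)*x^3*y^9 + (3/10)*x^2*y^10 - (2/25)*x*y^11 + (1/100)*y^12)/((x+y)*(x+y)*(x+y)*(x+y)*(x^2+y^2)*(x^2+y^2)))); [exact hs | exact hs2 | | field_tac |].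
   {
  apply (keyP (((3/10)*x^6 + (2/5)*x^5*y + (13/10)*x^4*y^2 - (4/5)*x^3*y^3 + (13/10)*x^2*y^4 + (2/5)*x*y^5 + (3/10)*y^6)/((x+y)*(x+y)*(x^2+y^2))) ((3*x^7 + 7*x^6*y + 17*x^5*y^2 + 5*x^4*y^3 + 5*x^3*y^4 + 17*x^2*y^5 + 7*x*y^6 + 3*y^7)) (10*(x+y)*(x+y)*(x^2+y^2)*(x+y)^1)); [ppos | field_tac | npos].
   }
   {
  apply (keyP (((1/100)*x^12 - (2/25)*x^11*y + (3/10)*x^10*y^2 - (2/5)*x^9*y^3 + (63/100)*x^8*y^4 - (52/25)*x^7*y^5 + (81/25)*x^6*y^6 - (52/25)*x^5*y^7 + (63/100)*x^4*y^8 - (2/5)*x^3*y^9 + (3/10)*x^2*y^10 - (2/25)*x*y^11 + (1/100)*y^12)/((x+y)*(x+y)*(x+y)*(x+y)*(x^2+y^2)*(x^2+y^2))) (((x-y)^2)^2*(x^15 + 3*x^14*y + x^13*y^2 + 27*x^12*y^3 + 281*x^11*y^4 + 1147*x^10*y^5 + 2689*x^9*y^6 + 4043*x^8*y^7 + 4043*x^7*y^8 + 2689*x^6*y^9 + 1147*x^5*y^10 + 281*x^4*y^11 + 27*x^3*y^12 + x^2*y^13 + 3*x*y^14 + y^15)) (100*(x+y)*(x+y)*(x+y)*(x+y)*(x^2+y^2)*(x^2+y^2)*(x+y)^7)); [ppos | field_tac | npos].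
   }
Qed.

Lemma L11 (x y : R) (hx : 0 < x) (hy : 0 < y) : 2/5 * D hS hP4 x y <= 2/7 * D hP6 hP4 x y.
Proof.
  prep x y.
  apply (top _ _ ((((2/7)*x^6 + (4/7)*x^5*y + (26/35)*x^4*y^2 + (26/35)*x^2*y^4 + (4/7)*x*y^5 + (2/7)*y^6)/((x+y)*(x+y)*(x^2+y^2))) - ((2/5))*s)); [field_tac|].
  apply (radB s ((x^4+y^4)/2) (((2/7)*x^6 + (4/7)*x^5*y + (26/35)*x^4*y^2 + (26/35)*x^2*y^4 + (4/7)*x*y^5 + (2/7)*y^6)/((x+y)*(x+y)*(x^2+y^2))) ((2/5)) (((2/1225)*x^12 + (8/1225)*x^11*y + (136/1225)*x^10*y^2 - (136/1225)*x^9*y^3 - (274/1225)*x^8*y^4 - (128/1225)*x^7*y^5 + (16/25)*x^6*y^6 - (128/1225)*x^5*y^7 - (274/1225)*x^4*y^8 - (136/1225)*x^3*y^9 + (136/1225)*x^2*y^10 + (8/1225)*x*y^11 + (2/1225)*y^12)/((x+y)*(x+y)*(x+y)*(x+y)*(x^2+y^2)*(x^2+y^2)))); [exact hs | exact hs2 | | field_tac |].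
   {
  apply (keyP (((2/7)*x^6 + (4/7)*x^5*y + (26/35)*x^4*y^2 + (26/35)*x^2*y^4 + (4/7)*x*y^5 + (2/7)*y^6)/((x+y)*(x+y)*(x^2+y^2))) ((5*x^6 + 10*x^5*y + 13*x^4*y^2 + 13*x^2*y^4 + 10*x*y^5 + 5*y^6)) ((35/2)*(x+y)*(x+y)*(x^2+y^2))); [ppos | field_tac | npos].
   }
   {
  apply (keyP (((2/1225)*x^12 + (8/1225)*x^11*y + (136/1225)*x^10*y^2 - (136/1225)*x^9*y^3 - (274/1225)*x^8*y^4 - (128/1225)*x^7*y^5 + (16/25)*x^6*y^6 - (128/1225)*x^5*y^7 - (274/1225)*x^4*y^8 - (136/1225)*x^3*y^9 + (136/1225)*x^2*y^10 + (8/1225)*x*y^11 + (2/1225)*y^12)/((x+y)*(x+y)*(x+y)*(x+y)*(x^2+y^2)*(x^2+y^2))) (((x-y)^2)^2*(x^8 + 8*x^7*y + 94*x^6*y^2 + 264*x^5*y^3 + 386*x^4*y^4 + 264*x^3*y^5 + 94*x^2*y^6 + 8*x*y^7 + y^8)) ((1225/2)*(x+y)*(x+y)*(x+y)*(x+y)*(x^2+y^2)*(x^2+y^2))); [ppos | field_tac | npos].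
   }
Qed.

Lemma L12 (x y : R) (hx : 0 < x) (hy : 0 < y) : 2/5 * D hP6 hN1 x y <= 1/3 * D hP6 hG x y.
Proof.
  prep x y.
  apply (top _ _ (((1/30)*x^4 - (2/15)*x^3*y + (1/5)*x^2*y^2 - (2/15)*x*y^3 + (1/30)*y^4)/((x^2+y^2)))); [field_tac|].
  apply (keyP (((1/30)*x^4 - (2/15)*x^3*y + (1/5)*x^2*y^2 - (2/15)*x*y^3 + (1/30)*y^4)/((x^2+y^2))) (((x-y)^2)^2*(1)) (30*(x^2+y^2))); [ppos | field_tac | npos].
Qed.

Lemma L13 (x y : R) (hx : 0 < x) (hy : 0 < y) : 2/7 * D hP6 hP4 x y <= 1/3 * D hP6 hG x y.
Proof.
  prep x y.
  apply (top _ _ (((1/21)*x^6 - (5/21)*x^5*y + (11/21)*x^4*y^2 - (2/3)*x^3*y^3 + (11/21)*x^2*y^4 - (5/21)*x*y^5 + (1/21)*y^6)/((x+y)*(x+y)*(x^2+y^2)))); [field_tac|].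
  apply (keyP (((1/21)*x^6 - (5/21)*x^5*y + (11/21)*x^4*y^2 - (2/3)*x^3*y^3 + (11/21)*x^2*y^4 - (5/21)*x*y^5 + (1/21)*y^6)/((x+y)*(x+y)*(x^2+y^2))) (((x-y)^2)^2*(x^3 + y^3)) (21*(x+y)*(x+y)*(x^2+y^2)*(x+y)^1)); [ppos | field_tac | npos].
Qed.

Lemma L14 (x y : R) (hx : 0 < x) (hy : 0 < y) : 1/3 * D hP6 hG x y <= 2/5 * D hP5 hH x y.
Proof.
  prep x y.
  apply (top _ _ (((1/15)*x^6 - (1/3)*x^5*y + (11/15)*x^4*y^2 - (14/15)*x^3*y^3 + (11/15)*x^2*y^4 - (1/3)*x*y^5 + (1/15)*y^6)/((x+y)*(x+y)*(x^2+y^2)))); [field_tac|].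
  apply (keyP (((1/15)*x^6 - (1/3)*x^5*y + (11/15)*x^4*y^2 - (14/15)*x^3*y^3 + (11/15)*x^2*y^4 - (1/3)*x*y^5 + (1/15)*y^6)/((x+y)*(x+y)*(x^2+y^2))) (((x-y)^2)^2*(x^3 + y^3)) (15*(x+y)*(x+y)*(x^2+y^2)*(x+y)^1)); [ppos | field_tac | npos].
Qed.

Lemma L15 (x y : R) (hx : 0 < x) (hy : 0 < y) : 2/5 * D hP5 hH x y <= 4 * D hN2 hN1 x y.
Proof.
  prep x y.
  apply (top _ _ (((-(7/5)*x^6 - 4*x^5*y - (37/5)*x^4*y^2 - (32/5)*x^3*y^3 - (37/5)*x^2*y^4 - 4*x*y^5 - (7/5)*y^6)/((x+y)*(x+y)*(x^2+y^2))) + (2*x + 2*y)*n)); [field_tac|].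
  apply (radA n ((x^2+y^2)/2) ((-(7/5)*x^6 - 4*x^5*y - (37/5)*x^4*y^2 - (32/5)*x^3*y^3 - (37/5)*x^2*y^4 - 4*x*y^5 - (7/5)*y^6)/((x+y)*(x+y)*(x^2+y^2))) (2*x + 2*y) (((1/25)*x^12 + (4/5)*x^11*y - (18/25)*x^10*y^2 - (28/25)*x^9*y^3 - (17/25)*x^8*y^4 + (72/25)*x^7*y^5 - (12/5)*x^6*y^6 + (72/25)*x^5*y^7 - (17/25)*x^4*y^8 - (28/25)*x^3*y^9 - (18/25)*x^2*y^10 + (4/5)*x*y^11 + (1/25)*y^12)/((x+y)*(x+y)*(x+y)*(x+y)*(x^2+y^2)*(x^2+y^2)))); [exact hn | exact hn2 | | field_tac |].
   {
  apply (keyP (2*x + 2*y) ((x + y)) ((1/2))); [ppos | field_tac | npos].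
   }
   {
  apply (keyP (((1/25)*x^12 + (4/5)*x^11*y - (18/25)*x^10*y^2 - (28/25)*x^9*y^3 - (17/25)*x^8*y^4 + (72/25)*x^7*y^5 - (12/5)*x^6*y^6 + (72/25)*x^5*y^7 - (17/25)*x^4*y^8 - (28/25)*x^3*y^9 - (18/25)*x^2*y^10 + (4/5)*x*y^11 + (1/25)*y^12)/((x+y)*(x+y)*(x+y)*(x+y)*(x^2+y^2)*(x^2+y^2))) (((x-y)^2)^2*(x^8 + 24*x^7*y + 72*x^6*y^2 + 120*x^5*y^3 + 126*x^4*y^4 + 120*x^3*y^5 + 72*x^2*y^6 + 24*x*y^7 + y^8)) (25*(x+y)*(x+y)*(x+y)*(x+y)*(x^2+y^2)*(x^2+y^2))); [ppos | field_tac | npos].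
   }
Qed.

Lemma L16 (x y : R) (hx : 0 < x) (hy : 0 < y) : 1/3 * D hP6 hG x y <= 2/3 * D hA hP4 x y.
Proof.
  prep x y.
  apply (top _ _ (((1/3)*x^5*y - (4/3)*x^4*y^2 + 2*x^3*y^3 - (4/3)*x^2*y^4 + (1/3)*x*y^5)/((x+y)*(x+y)*(x^2+y^2)))); [field_tac|].
  apply (keyP (((1/3)*x^5*y - (4/3)*x^4*y^2 + 2*x^3*y^3 - (4/3)*x^2*y^4 + (1/3)*x*y^5)/((x+y)*(x+y)*(x^2+y^2))) (((x-y)^2)^2*(x*y)) (3*(x+y)*(x+y)*(x^2+y^2))); [ppos | field_tac | npos].
Qed.

Lemma L17 (x y : R) (hx : 0 < x) (hy : 0 < y) : 2/3 * D hA hP4 x y <= 4 * D hN2 hN1 x y.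
Proof.
  prep x y.
  apply (top _ _ (((-(4/3)*x^4 - (14/3)*x^3*y - 4*x^2*y^2 - (14/3)*x*y^3 - (4/3)*y^4)/((x+y)*(x+y))) + (2*x + 2*y)*n)); [field_tac|].
  apply (radA n ((x^2+y^2)/2) ((-(4/3)*x^4 - (14/3)*x^3*y - 4*x^2*y^2 - (14/3)*x*y^3 - (4/3)*y^4)/((x+y)*(x+y))) (2*x + 2*y) (((2/9)*x^8 - (4/9)*x^7*y - (4/9)*x^6*y^2 + (20/9)*x^5*y^3 - (28/9)*x^4*y^4 + (20/9)*x^3*y^5 - (4/9)*x^2*y^6 - (4/9)*x*y^7 + (2/9)*y^8)/((x+y)*(x+y)*(x+y)*(x+y)))); [exact hn | exact hn2 | | field_tac |].
   {
  apply (keyP (2*x + 2*y) ((x + y)) ((1/2))); [ppos | field_tac | npos].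
   }
   {
  apply (keyP (((2/9)*x^8 - (4/9)*x^7*y - (4/9)*x^6*y^2 + (20/9)*x^5*y^3 - (28/9)*x^4*y^4 + (20/9)*x^3*y^5 - (4/9)*x^2*y^6 - (4/9)*x*y^7 + (2/9)*y^8)/((x+y)*(x+y)*(x+y)*(x+y))) (((x-y)^2)^2*(x^4 + 2*x^3*y + 2*x*y^3 + y^4)) ((9/2)*(x+y)*(x+y)*(x+y)*(x+y))); [ppos | field_tac | npos].
   }
Qed.

Lemma L18 (x y : R) (hx : 0 < x) (hy : 0 < y) : 4 * D hN2 hN1 x y <= 4/3 * D hN2 hG x y.
Proof.
  prep x y.
  apply (top _ _ ((x^2 + (2/3)*x*y + y^2) - ((4/3)*x + (4/3)*y)*n)); [field_tac|].
  apply (radB n ((x^2+y^2)/2) (x^2 + (2/3)*x*y + y^2) ((4/3)*x + (4/3)*y) ((1/9)*x^4 - (4/9)*x^3*y + (2/3)*x^2*y^2 - (4/9)*x*y^3 + (1/9)*y^4)); [exact hn | exact hn2 | | field_tac |].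
   {
  apply (keyP (x^2 + (2/3)*x*y + y^2) ((3*x^2 + 2*x*y + 3*y^2)) (3)); [ppos | field_tac | npos].
   }
   {
  apply (keyP ((1/9)*x^4 - (4/9)*x^3*y + (2/3)*x^2*y^2 - (4/9)*x*y^3 + (1/9)*y^4) (((x-y)^2)^2*(1)) (9)); [ppos | field_tac | npos].
   }
Qed.

Lemma L19 (x y : R) (hx : 0 < x) (hy : 0 < y) : 4/3 * D hN2 hG x y <= D hA hG x y.
Proof.
  prep x y.
  apply (top _ _ (((1/2)*x^2 + (1/3)*x*y + (1/2)*y^2) - ((2/3)*x + (2/3)*y)*n)); [field_tac|].
  apply (radB n ((x^2+y^2)/2) ((1/2)*x^2 + (1/3)*x*y + (1/2)*y^2) ((2/3)*x + (2/3)*y) ((1/36)*x^4 - (1/9)*x^3*y + (1/6)*x^2*y^2 - (1/9)*x*y^3 + (1/36)*y^4)); [exact hn | exact hn2 | | field_tac |].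
   {
  apply (keyP ((1/2)*x^2 + (1/3)*x*y + (1/2)*y^2) ((3*x^2 + 2*x*y + 3*y^2)) (6)); [ppos | field_tac | npos].
   }
   {
  apply (keyP ((1/36)*x^4 - (1/9)*x^3*y + (1/6)*x^2*y^2 - (1/9)*x*y^3 + (1/36)*y^4) (((x-y)^2)^2*(1)) (36)); [ppos | field_tac | npos].
   }
Qed.

Lemma L20 (x y : R) (hx : 0 < x) (hy : 0 < y) : D hA hG x y <= 4 * D hA hN2 x y.
Proof.
  prep x y.
  apply (top _ _ (((3/2)*x^2 + x*y + (3/2)*y^2) - (2*x + 2*y)*n)); [field_tac|].
  apply (radB n ((x^2+y^2)/2) ((3/2)*x^2 + x*y + (3/2)*y^2) (2*x + 2*y) ((1/4)*x^4 - x^3*y + (3/2)*x^2*y^2 - x*y^3 + (1/4)*y^4)); [exact hn | exact hn2 | | field_tac |].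
   {
  apply (keyP ((3/2)*x^2 + x*y + (3/2)*y^2) ((3*x^2 + 2*x*y + 3*y^2)) (2)); [ppos | field_tac | npos].
   }
   {
  apply (keyP ((1/4)*x^4 - x^3*y + (3/2)*x^2*y^2 - x*y^3 + (1/4)*y^4) (((x-y)^2)^2*(1)) (4)); [ppos | field_tac | npos].
   }
Qed.

Lemma L21 (x y : R) (hx : 0 < x) (hy : 0 < y) : 4 * D hA hN2 x y <= 2/3 * D hP5 hG x y.
Proof.
  prep x y.
  apply (top _ _ (((-(4/3)*x^4 - (14/3)*x^3*y - 4*x^2*y^2 - (14/3)*x*y^3 - (4/3)*y^4)/((x+y)*(x+y))) + (2*x + 2*y)*n)); [field_tac|].
  apply (radA n ((x^2+y^2)/2) ((-(4/3)*x^4 - (14/3)*x^3*y - 4*x^2*y^2 - (14/3)*x*y^3 - (4/3)*y^4)/((x+y)*(x+y))) (2*x + 2*y) (((2/9)*x^8 - (4/9)*x^7*y - (4/9)*x^6*y^2 + (20/9)*x^5*y^3 - (28/9)*x^4*y^4 + (20/9)*x^3*y^5 - (4/9)*x^2*y^6 - (4/9)*x*y^7 + (2/9)*y^8)/((x+y)*(x+y)*(x+y)*(x+y)))); [exact hn | exact hn2 | | field_tac |].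
   {
  apply (keyP (2*x + 2*y) ((x + y)) ((1/2))); [ppos | field_tac | npos].
   }
   {
  apply (keyP (((2/9)*x^8 - (4/9)*x^7*y - (4/9)*x^6*y^2 + (20/9)*x^5*y^3 - (28/9)*x^4*y^4 + (20/9)*x^3*y^5 - (4/9)*x^2*y^6 - (4/9)*x*y^7 + (2/9)*y^8)/((x+y)*(x+y)*(x+y)*(x+y))) (((x-y)^2)^2*(x^4 + 2*x^3*y + 2*x*y^3 + y^4)) ((9/2)*(x+y)*(x+y)*(x+y)*(x+y))); [ppos | field_tac | npos].
   }
Qed.

Lemma L22 (x y : R) (hx : 0 < x) (hy : 0 < y) : 2/3 * D hP5 hG x y <= D hP5 hN1 x y.
Proof.
  prep x y.
  apply (top _ _ (((1/12)*x^4 - (1/3)*x^3*y + (1/2)*x^2*y^2 - (1/3)*x*y^3 + (1/12)*y^4)/((x+y)*(x+y)))); [field_tac|].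
  apply (keyP (((1/12)*x^4 - (1/3)*x^3*y + (1/2)*x^2*y^2 - (1/3)*x*y^3 + (1/12)*y^4)/((x+y)*(x+y))) (((x-y)^2)^2*(1)) (12*(x+y)*(x+y))); [ppos | field_tac | npos].
Qed.

Lemma L23 (x y : R) (hx : 0 < x) (hy : 0 < y) : D hP5 hN1 x y <= 6/5 * D hP5 hN3 x y.
Proof.
  prep x y.
  apply (top _ _ (((1/20)*x^4 - (1/5)*x^3*y + (3/10)*x^2*y^2 - (1/5)*x*y^3 + (1/20)*y^4)/((x+y)*(x+y)))); [field_tac|].
  apply (keyP (((1/20)*x^4 - (1/5)*x^3*y + (3/10)*x^2*y^2 - (1/5)*x*y^3 + (1/20)*y^4)/((x+y)*(x+y))) (((x-y)^2)^2*(1)) (20*(x+y)*(x+y))); [ppos | field_tac | npos].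
Qed.

Lemma L24 (x y : R) (hx : 0 < x) (hy : 0 < y) : 6/5 * D hP5 hN3 x y <= 4/3 * D hP5 hN2 x y.
Proof.
  prep x y.
  apply (top _ _ ((((8/15)*x^4 + (6/5)*x^3*y + (28/15)*x^2*y^2 + (6/5)*x*y^3 + (8/15)*y^4)/((x+y)*(x+y))) - ((2/3)*x + (2/3)*y)*n)); [field_tac|].
  apply (radB n ((x^2+y^2)/2) (((8/15)*x^4 + (6/5)*x^3*y + (28/15)*x^2*y^2 + (6/5)*x*y^3 + (8/15)*y^4)/((x+y)*(x+y))) ((2/3)*x + (2/3)*y) (((14/225)*x^8 - (4/75)*x^7*y - (28/225)*x^6*y^2 - (4/225)*x^5*y^3 + (4/15)*x^4*y^4 - (4/225)*x^3*y^5 - (28/225)*x^2*y^6 - (4/75)*x*y^7 + (14/225)*y^8)/((x+y)*(x+y)*(x+y)*(x+y)))); [exact hn | exact hn2 | | field_tac |].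
   {
  apply (keyP (((8/15)*x^4 + (6/5)*x^3*y + (28/15)*x^2*y^2 + (6/5)*x*y^3 + (8/15)*y^4)/((x+y)*(x+y))) ((4*x^4 + 9*x^3*y + 14*x^2*y^2 + 9*x*y^3 + 4*y^4)) ((15/2)*(x+y)*(x+y))); [ppos | field_tac | npos].
   }
   {
  apply (keyP (((14/225)*x^8 - (4/75)*x^7*y - (28/225)*x^6*y^2 - (4/225)*x^5*y^3 + (4/15)*x^4*y^4 - (4/225)*x^3*y^5 - (28/225)*x^2*y^6 - (4/75)*x*y^7 + (14/225)*y^8)/((x+y)*(x+y)*(x+y)*(x+y))) (((x-y)^2)^2*(7*x^4 + 22*x^3*y + 32*x^2*y^2 + 22*x*y^3 + 7*y^4)) ((225/2)*(x+y)*(x+y)*(x+y)*(x+y))); [ppos | field_tac | npos].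
   }
Qed.

Lemma L25 (x y : R) (hx : 0 < x) (hy : 0 < y) : 4/3 * D hP5 hN2 x y <= 2 * D hP5 hA x y.
Proof.
  prep x y.
  apply (top _ _ (((-(1/3)*x^4 - 2*x^3*y - (2/3)*x^2*y^2 - 2*x*y^3 - (1/3)*y^4)/((x+y)*(x+y))) + ((2/3)*x + (2/3)*y)*n)); [field_tac|].
  apply (radA n ((x^2+y^2)/2) ((-(1/3)*x^4 - 2*x^3*y - (2/3)*x^2*y^2 - 2*x*y^3 - (1/3)*y^4)/((x+y)*(x+y))) ((2/3)*x + (2/3)*y) (((1/9)*x^8 - (8/9)*x^6*y^2 + (16/9)*x^5*y^3 - 2*x^4*y^4 + (16/9)*x^3*y^5 - (8/9)*x^2*y^6 + (1/9)*y^8)/((x+y)*(x+y)*(x+y)*(x+y)))); [exact hn | exact hn2 | | field_tac |].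
   {
  apply (keyP ((2/3)*x + (2/3)*y) ((x + y)) ((3/2))); [ppos | field_tac | npos].
   }
   {
  apply (keyP (((1/9)*x^8 - (8/9)*x^6*y^2 + (16/9)*x^5*y^3 - 2*x^4*y^4 + (16/9)*x^3*y^5 - (8/9)*x^2*y^6 + (1/9)*y^8)/((x+y)*(x+y)*(x+y)*(x+y))) (((x-y)^2)^2*(x^4 + 4*x^3*y + 2*x^2*y^2 + 4*x*y^3 + y^4)) (9*(x+y)*(x+y)*(x+y)*(x+y))); [ppos | field_tac | npos].
   }
Qed.

Lemma L26 (x y : R) (hx : 0 < x) (hy : 0 < y) : D hS hA x y <= 4/5 * D hS hN2 x y.
Proof.
  prep x y.
  apply (top _ _ ((((1/2)*x^2 + (1/2)*y^2) - ((2/5)*x + (2/5)*y)*n) - ((1/5))*s)); [field_tac|].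
  apply (radB s ((x^4+y^4)/2) (((1/2)*x^2 + (1/2)*y^2) - ((2/5)*x + (2/5)*y)*n) ((1/5)) (((31/100)*x^4 + (4/25)*x^3*y + (33/50)*x^2*y^2 + (4/25)*x*y^3 + (31/100)*y^4) - ((2/5)*x^3 + (2/5)*x^2*y + (2/5)*x*y^2 + (2/5)*y^3)*n)); [exact hs | exact hs2 | | apply Rminus_diag_uniq; transitivity (((4/25)*x^2 + (8/25)*x*y + (4/25)*y^2)*(n*n - ((x^2+y^2)/2))); [field_tac | rewrite hn2; ring] |].
   {
  apply (radB n ((x^2+y^2)/2) ((1/2)*x^2 + (1/2)*y^2) ((2/5)*x + (2/5)*y) ((17/100)*x^4 - (4/25)*x^3*y + (17/50)*x^2*y^2 - (4/25)*x*y^3 + (17/100)*y^4)); [exact hn | exact hn2 | | field_tac |].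
   {
  apply (keyP ((1/2)*x^2 + (1/2)*y^2) ((x^2 + y^2)) (2)); [ppos | field_tac | npos].
   }
   {
  apply (keyP ((17/100)*x^4 - (4/25)*x^3*y + (17/50)*x^2*y^2 - (4/25)*x*y^3 + (17/100)*y^4) ((17*x^5 + x^4*y + 18*x^3*y^2 + 18*x^2*y^3 + x*y^4 + 17*y^5)) (100*(x+y)^1)); [ppos | field_tac | npos].
   }
   }
   {
  apply (radB n ((x^2+y^2)/2) ((31/100)*x^4 + (4/25)*x^3*y + (33/50)*x^2*y^2 + (4/25)*x*y^3 + (31/100)*y^4) ((2/5)*x^3 + (2/5)*x^2*y + (2/5)*x*y^2 + (2/5)*y^3) ((161/10000)*x^8 - (38/625)*x^7*y + (287/2500)*x^6*y^2 - (106/625)*x^5*y^3 + (199/1000)*x^4*y^4 - (106/625)*x^3*y^5 + (287/2500)*x^2*y^6 - (38/625)*x*y^7 + (161/10000)*y^8)); [exact hn | exact hn2 | | field_tac |].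
   {
  apply (keyP ((31/100)*x^4 + (4/25)*x^3*y + (33/50)*x^2*y^2 + (4/25)*x*y^3 + (31/100)*y^4) ((31*x^4 + 16*x^3*y + 66*x^2*y^2 + 16*x*y^3 + 31*y^4)) (100)); [ppos | field_tac | npos].
   }
   {
  apply (keyP ((161/10000)*x^8 - (38/625)*x^7*y + (287/2500)*x^6*y^2 - (106/625)*x^5*y^3 + (199/1000)*x^4*y^4 - (106/625)*x^3*y^5 + (287/2500)*x^2*y^6 - (38/625)*x*y^7 + (161/10000)*y^8) (((x-y)^2)^2*(161*x^4 + 36*x^3*y + 326*x^2*y^2 + 36*x*y^3 + 161*y^4)) (10000)); [ppos | field_tac | npos].
   }
   }
Qed.

Lemma L27 (x y : R) (hx : 0 < x) (hy : 0 < y) : 4/5 * D hS hN2 x y <= 2/3 * D hS hN1 x y.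
Proof.
  prep x y.
  apply (top _ _ (((-(1/6)*x^2 - (1/3)*x*y - (1/6)*y^2) + ((2/5)*x + (2/5)*y)*n) - ((2/15))*s)); [field_tac|].
  apply (radB s ((x^4+y^4)/2) ((-(1/6)*x^2 - (1/3)*x*y - (1/6)*y^2) + ((2/5)*x + (2/5)*y)*n) ((2/15)) (((89/900)*x^4 + (61/225)*x^3*y + (49/150)*x^2*y^2 + (61/225)*x*y^3 + (89/900)*y^4) - ((2/15)*x^3 + (2/5)*x^2*y + (2/5)*x*y^2 + (2/15)*y^3)*n)); [exact hs | exact hs2 | | apply Rminus_diag_uniq; transitivity (((4/25)*x^2 + (8/25)*x*y + (4/25)*y^2)*(n*n - ((x^2+y^2)/2))); [field_tac | rewrite hn2; ring] |].
   {
  apply (radA n ((x^2+y^2)/2) (-(1/6)*x^2 - (1/3)*x*y - (1/6)*y^2) ((2/5)*x + (2/5)*y) ((47/900)*x^4 + (11/225)*x^3*y - (1/150)*x^2*y^2 + (11/225)*x*y^3 + (47/900)*y^4)); [exact hn | exact hn2 | | field_tac |].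
   {
  apply (keyP ((2/5)*x + (2/5)*y) ((x + y)) ((5/2))); [ppos | field_tac | npos].
   }
   {
  apply (keyP ((47/900)*x^4 + (11/225)*x^3*y - (1/150)*x^2*y^2 + (11/225)*x*y^3 + (47/900)*y^4) ((47*x^5 + 91*x^4*y + 38*x^3*y^2 + 38*x^2*y^3 + 91*x*y^4 + 47*y^5)) (900*(x+y)^1)); [ppos | field_tac | npos].
   }
   }
   {
  apply (radB n ((x^2+y^2)/2) ((89/900)*x^4 + (61/225)*x^3*y + (49/150)*x^2*y^2 + (61/225)*x*y^3 + (89/900)*y^4) ((2/15)*x^3 + (2/5)*x^2*y + (2/5)*x*y^2 + (2/15)*y^3) ((721/810000)*x^8 + (29/101250)*x^7*y - (833/202500)*x^6*y^2 - (37/101250)*x^5*y^3 + (107/16200)*x^4*y^4 - (37/101250)*x^3*y^5 - (833/202500)*x^2*y^6 + (29/101250)*x*y^7 + (721/810000)*y^8)); [exact hn | exact hn2 | | field_tac |].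
   {
  apply (keyP ((89/900)*x^4 + (61/225)*x^3*y + (49/150)*x^2*y^2 + (61/225)*x*y^3 + (89/900)*y^4) ((89*x^4 + 244*x^3*y + 294*x^2*y^2 + 244*x*y^3 + 89*y^4)) (900)); [ppos | field_tac | npos].
   }
   {
  apply (keyP ((721/810000)*x^8 + (29/101250)*x^7*y - (833/202500)*x^6*y^2 - (37/101250)*x^5*y^3 + (107/16200)*x^4*y^4 - (37/101250)*x^3*y^5 - (833/202500)*x^2*y^6 + (29/101250)*x*y^7 + (721/810000)*y^8) (((x-y)^2)^2*(721*x^4 + 3116*x^3*y + 4806*x^2*y^2 + 3116*x*y^3 + 721*y^4)) (810000)); [ppos | field_tac | npos].
   }
   }
Qed.

Lemma L28 (x y : R) (hx : 0 < x) (hy : 0 < y) : D hS hA x y <= 3/4 * D hS hN3 x y.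
Proof.
  prep x y.
  apply (top _ _ (((1/4)*x^2 - (1/4)*x*y + (1/4)*y^2) - ((1/4))*s)); [field_tac|].
  apply (radB s ((x^4+y^4)/2) ((1/4)*x^2 - (1/4)*x*y + (1/4)*y^2) ((1/4)) ((1/32)*x^4 - (1/8)*x^3*y + (3/16)*x^2*y^2 - (1/8)*x*y^3 + (1/32)*y^4)); [exact hs | exact hs2 | | field_tac |].
   {
  apply (keyP ((1/4)*x^2 - (1/4)*x*y + (1/4)*y^2) ((x^3 + y^3)) (4*(x+y)^1)); [ppos | field_tac | npos].
   }
   {
  apply (keyP ((1/32)*x^4 - (1/8)*x^3*y + (3/16)*x^2*y^2 - (1/8)*x*y^3 + (1/32)*y^4) (((x-y)^2)^2*(1)) (32)); [ppos | field_tac | npos].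
   }
Qed.

Lemma L29 (x y : R) (hx : 0 < x) (hy : 0 < y) : 3/4 * D hS hN3 x y <= 2/3 * D hS hN1 x y.
Proof.
  prep x y.
  apply (top _ _ (((1/12)*x^2 - (1/12)*x*y + (1/12)*y^2) - ((1/12))*s)); [field_tac|].
  apply (radB s ((x^4+y^4)/2) ((1/12)*x^2 - (1/12)*x*y + (1/12)*y^2) ((1/12)) ((1/288)*x^4 - (1/72)*x^3*y + (1/48)*x^2*y^2 - (1/72)*x*y^3 + (1/288)*y^4)); [exact hs | exact hs2 | | field_tac |].
   {
  apply (keyP ((1/12)*x^2 - (1/12)*x*y + (1/12)*y^2) ((x^3 + y^3)) (12*(x+y)^1)); [ppos | field_tac | npos].
   }
   {
  apply (keyP ((1/288)*x^4 - (1/72)*x^3*y + (1/48)*x^2*y^2 - (1/72)*x*y^3 + (1/288)*y^4) (((x-y)^2)^2*(1)) (288)); [ppos | field_tac | npos].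
   }
Qed.

Lemma L30 (x y : R) (hx : 0 < x) (hy : 0 < y) : 2/3 * D hS hN1 x y <= 1/3 * D hP6 hG x y.
Proof.
  prep x y.
  apply (top _ _ ((((1/2)*x^4 + (1/3)*x^2*y^2 + (1/2)*y^4)/((x^2+y^2))) - ((2/3))*s)); [field_tac|].
  apply (radB s ((x^4+y^4)/2) (((1/2)*x^4 + (1/3)*x^2*y^2 + (1/2)*y^4)/((x^2+y^2))) ((2/3)) (((1/36)*x^8 - (1/9)*x^6*y^2 + (1/6)*x^4*y^4 - (1/9)*x^2*y^6 + (1/36)*y^8)/((x^2+y^2)*(x^2+y^2)))); [exact hs | exact hs2 | | field_tac |].
   {
  apply (keyP (((1/2)*x^4 + (1/3)*x^2*y^2 + (1/2)*y^4)/((x^2+y^2))) ((3*x^4 + 2*x^2*y^2 + 3*y^4)) (6*(x^2+y^2))); [ppos | field_tac | npos].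
   }
   {
  apply (keyP (((1/36)*x^8 - (1/9)*x^6*y^2 + (1/6)*x^4*y^4 - (1/9)*x^2*y^6 + (1/36)*y^8)/((x^2+y^2)*(x^2+y^2))) (((x-y)^2)^2*(x^4 + 4*x^3*y + 6*x^2*y^2 + 4*x*y^3 + y^4)) (36*(x^2+y^2)*(x^2+y^2))); [ppos | field_tac | npos].
   }
Qed.

Lemma L31 (x y : R) (hx : 0 < x) (hy : 0 < y) : 1/3 * D hP6 hG x y <= 2/5 * D hP5 hH x y.
Proof.
  prep x y.
  apply (top _ _ (((1/15)*x^6 - (1/3)*x^5*y + (11/15)*x^4*y^2 - (14/15)*x^3*y^3 + (11/15)*x^2*y^4 - (1/3)*x*y^5 + (1/15)*y^6)/((x+y)*(x+y)*(x^2+y^2)))); [field_tac|].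
  apply (keyP (((1/15)*x^6 - (1/3)*x^5*y + (11/15)*x^4*y^2 - (14/15)*x^3*y^3 + (11/15)*x^2*y^4 - (1/3)*x*y^5 + (1/15)*y^6)/((x+y)*(x+y)*(x^2+y^2))) (((x-y)^2)^2*(x^3 + y^3)) (15*(x+y)*(x+y)*(x^2+y^2)*(x+y)^1)); [ppos | field_tac | npos].
Qed.

Lemma L32 (x y : R) (hx : 0 < x) (hy : 0 < y) : 2/3 * D hS hN1 x y <= 1/2 * D hS hG x y.
Proof.
  prep x y.
  apply (top _ _ (((1/6)*x^2 - (1/6)*x*y + (1/6)*y^2) - ((1/6))*s)); [field_tac|].
  apply (radB s ((x^4+y^4)/2) ((1/6)*x^2 - (1/6)*x*y + (1/6)*y^2) ((1/6)) ((1/72)*x^4 - (1/18)*x^3*y + (1/12)*x^2*y^2 - (1/18)*x*y^3 + (1/72)*y^4)); [exact hs | exact hs2 | | field_tac |].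
   {
  apply (keyP ((1/6)*x^2 - (1/6)*x*y + (1/6)*y^2) ((x^3 + y^3)) (6*(x+y)^1)); [ppos | field_tac | npos].
   }
   {
  apply (keyP ((1/72)*x^4 - (1/18)*x^3*y + (1/12)*x^2*y^2 - (1/18)*x*y^3 + (1/72)*y^4) (((x-y)^2)^2*(1)) (72)); [ppos | field_tac | npos].
   }
Qed.

Lemma L33 (x y : R) (hx : 0 < x) (hy : 0 < y) : 1/2 * D hS hG x y <= 2/5 * D hP5 hH x y.
Proof.
  prep x y.
  apply (top _ _ ((((2/5)*x^6 + (1/2)*x^5*y + (7/5)*x^4*y^2 - (3/5)*x^3*y^3 + (7/5)*x^2*y^4 + (1/2)*x*y^5 + (2/5)*y^6)/((x+y)*(x+y)*(x^2+y^2))) - ((1/2))*s)); [field_tac|].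
  apply (radB s ((x^4+y^4)/2) (((2/5)*x^6 + (1/2)*x^5*y + (7/5)*x^4*y^2 - (3/5)*x^3*y^3 + (7/5)*x^2*y^4 + (1/2)*x*y^5 + (2/5)*y^6)/((x+y)*(x+y)*(x^2+y^2))) ((1/2)) (((7/200)*x^12 - (1/10)*x^11*y + (37/100)*x^10*y^2 - (29/50)*x^9*y^3 + (121/200)*x^8*y^4 - (47/25)*x^7*y^5 + (31/10)*x^6*y^6 - (47/25)*x^5*y^7 + (121/200)*x^4*y^8 - (29/50)*x^3*y^9 + (37/100)*x^2*y^10 - (1/10)*x*y^11 + (7/200)*y^12)/((x+y)*(x+y)*(x+y)*(x+y)*(x^2+y^2)*(x^2+y^2)))); [exact hs | exact hs2 | | field_tac |].
   {
  apply (keyP (((2/5)*x^6 + (1/2)*x^5*y + (7/5)*x^4*y^2 - (3/5)*x^3*y^3 + (7/5)*x^2*y^4 + (1/2)*x*y^5 + (2/5)*y^6)/((x+y)*(x+y)*(x^2+y^2))) ((4*x^7 + 9*x^6*y + 19*x^5*y^2 + 8*x^4*y^3 + 8*x^3*y^4 + 19*x^2*y^5 + 9*x*y^6 + 4*y^7)) (10*(x+y)*(x+y)*(x^2+y^2)*(x+y)^1)); [ppos | field_tac | npos].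
   }
   {
  apply (keyP (((7/200)*x^12 - (1/10)*x^11*y + (37/100)*x^10*y^2 - (29/50)*x^9*y^3 + (121/200)*x^8*y^4 - (47/25)*x^7*y^5 + (31/10)*x^6*y^6 - (47/25)*x^5*y^7 + (121/200)*x^4*y^8 - (29/50)*x^3*y^9 + (37/100)*x^2*y^10 - (1/10)*x*y^11 + (7/200)*y^12)/((x+y)*(x+y)*(x+y)*(x+y)*(x^2+y^2)*(x^2+y^2))) (((x-y)^2)^2*(7*x^8 + 8*x^7*y + 64*x^6*y^2 + 120*x^5*y^3 + 242*x^4*y^4 + 120*x^3*y^5 + 64*x^2*y^6 + 8*x*y^7 + 7*y^8)) (200*(x+y)*(x+y)*(x+y)*(x+y)*(x^2+y^2)*(x^2+y^2))); [ppos | field_tac | npos].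
   }
Qed.

Lemma L34 (x y : R) (hx : 0 < x) (hy : 0 < y) : 1/8 * D hP6 hP1 x y <= 1/6 * D hP6 hP2 x y.
Proof.
  prep x y.
  apply (top _ _ (((1/24)*x^14 - (1/24)*x^12*y^2 - (1/8)*x^10*y^4 + (1/8)*x^8*y^6 + (1/8)*x^6*y^8 - (1/8)*x^4*y^10 - (1/24)*x^2*y^12 + (1/24)*y^14)/((x^2+y^2)*(x^4+y^4)*(x^6+y^6)))); [field_tac|].
  apply (keyP (((1/24)*x^14 - (1/24)*x^12*y^2 - (1/8)*x^10*y^4 + (1/8)*x^8*y^6 + (1/8)*x^6*y^8 - (1/8)*x^4*y^10 - (1/24)*x^2*y^12 + (1/24)*y^14)/((x^2+y^2)*(x^4+y^4)*(x^6+y^6))) (((x-y)^2)^2*(x^10 + 4*x^9*y + 9*x^8*y^2 + 16*x^7*y^3 + 22*x^6*y^4 + 24*x^5*y^5 + 22*x^4*y^6 + 16*x^3*y^7 + 9*x^2*y^8 + 4*x*y^9 + y^10)) (24*(x^2+y^2)*(x^4+y^4)*(x^6+y^6))); [ppos | field_tac | npos].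
Qed.

Lemma L35 (x y : R) (hx : 0 < x) (hy : 0 < y) : 1/8 * D hP6 hP1 x y <= 2/9 * D hP5 hP2 x y.
Proof.
  prep x y.
  apply (top _ _ (((7/72)*x^16 - (1/4)*x^15*y + (4/9)*x^14*y^2 - (7/36)*x^13*y^3 + (2/9)*x^12*y^4 - (41/36)*x^11*y^5 + (4/9)*x^10*y^6 - (7/36)*x^9*y^7 + (41/36)*x^8*y^8 - (7/36)*x^7*y^9 + (4/9)*x^6*y^10 - (41/36)*x^5*y^11 + (2/9)*x^4*y^12 - (7/36)*x^3*y^13 + (4/9)*x^2*y^14 - (1/4)*x*y^15 + (7/72)*y^16)/((x+y)*(x+y)*(x^2+y^2)*(x^4+y^4)*(x^6+y^6)))); [field_tac|].
  apply (keyP (((7/72)*x^16 - (1/4)*x^15*y + (4/9)*x^14*y^2 - (7/36)*x^13*y^3 + (2/9)*x^12*y^4 - (41/36)*x^11*y^5 + (4/9)*x^10*y^6 - (7/36)*x^9*y^7 + (41/36)*x^8*y^8 - (7/36)*x^7*y^9 + (4/9)*x^6*y^10 - (41/36)*x^5*y^11 + (2/9)*x^4*y^12 - (7/36)*x^3*y^13 + (4/9)*x^2*y^14 - (1/4)*x*y^15 + (7/72)*y^16)/((x+y)*(x+y)*(x^2+y^2)*(x^4+y^4)*(x^6+y^6))) (((x-y)^2)^2*(7*x^12 + 10*x^11*y + 30*x^10*y^2 + 74*x^9*y^3 + 165*x^8*y^4 + 244*x^7*y^5 + 284*x^6*y^6 + 244*x^5*y^7 + 165*x^4*y^8 + 74*x^3*y^9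 + 30*x^2*y^10 + 10*x*y^11 + 7*y^12)) (72*(x+y)*(x+y)*(x^2+y^2)*(x^4+y^4)*(x^6+y^6))); [ppos | field_tac | npos].
Qed.

Lemma L36 (x y : R) (hx : 0 < x) (hy : 0 < y) : 2/13 * D hP5 hP1 x y <= 1/6 * D hP6 hP2 x y.
Proof.
  prep x y.
  apply (top _ _ (((1/78)*x^16 + (1/3)*x^15*y - (4/13)*x^14*y^2 - (1/39)*x^13*y^3 - (37/78)*x^12*y^4 + (4/13)*x^11*y^5 - (4/13)*x^10*y^6 + (8/13)*x^9*y^7 - (4/13)*x^8*y^8 + (8/13)*x^7*y^9 - (4/13)*x^6*y^10 + (4/13)*x^5*y^11 - (37/78)*x^4*y^12 - (1/39)*x^3*y^13 - (4/13)*x^2*y^14 + (1/3)*x*y^15 + (1/78)*y^16)/((x+y)*(x+y)*(x^2+y^2)*(x^4+y^4)*(x^6+y^6)))); [field_tac|].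
  apply (keyP (((1/78)*x^16 + (1/3)*x^15*y - (4/13)*x^14*y^2 - (1/39)*x^13*y^3 - (37/78)*x^12*y^4 + (4/13)*x^11*y^5 - (4/13)*x^10*y^6 + (8/13)*x^9*y^7 - (4/13)*x^8*y^8 + (8/13)*x^7*y^9 - (4/13)*x^6*y^10 + (4/13)*x^5*y^11 - (37/78)*x^4*y^12 - (1/39)*x^3*y^13 - (4/13)*x^2*y^14 + (1/3)*x*y^15 + (1/78)*y^16)/((x+y)*(x+y)*(x^2+y^2)*(x^4+y^4)*(x^6+y^6))) (((x-y)^2)^2*(x^12 + 30*x^11*y + 90*x^10*y^2 + 182*x^9*y^3 + 270*x^8*y^4 + 342*x^7*y^5 + 362*x^6*y^6 + 342*x^5*y^7 + 270*x^4*y^8 + 182*x^3*y^9 + 90*x^2*y^10 + 30*x*y^11 + y^12)) (78*(x+y)*(x+y)*(x^2+y^2)*(x^4+y^4)*(x^6+y^6))); [ppos | field_tac | npos].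
Qed.

Lemma L37 (x y : R) (hx : 0 < x) (hy : 0 < y) : 2/13 * D hP5 hP1 x y <= 2/9 * D hP5 hP2 x y.
Proof.
  prep x y.
  apply (top _ _ (((8/117)*x^14 + (8/117)*x^12*y^2 - (16/117)*x^11*y^3 - (2/13)*x^10*y^4 - (4/9)*x^9*y^5 + (34/117)*x^8*y^6 + (8/13)*x^7*y^7 + (34/117)*x^6*y^8 - (4/9)*x^5*y^9 - (2/13)*x^4*y^10 - (16/117)*x^3*y^11 + (8/117)*x^2*y^12 + (8/117)*y^14)/((x+y)*(x+y)*(x^4+y^4)*(x^6+y^6)))); [field_tac|].
  apply (keyP (((8/117)*x^14 + (8/117)*x^12*y^2 - (16/117)*x^11*y^3 - (2/13)*x^10*y^4 - (4/9)*x^9*y^5 + (34/117)*x^8*y^6 + (8/13)*x^7*y^7 + (34/117)*x^6*y^8 - (4/9)*x^5*y^9 - (2/13)*x^4*y^10 - (16/117)*x^3*y^11 + (8/117)*x^2*y^12 + (8/117)*y^14)/((x+y)*(x+y)*(x^4+y^4)*(x^6+y^6))) (((x-y)^2)^2*(4*x^10 + 16*x^9*y + 44*x^8*y^2 + 88*x^7*y^3 + 139*x^6*y^4 + 162*x^5*y^5 + 139*x^4*y^6 + 88*x^3*y^7 + 44*x^2*y^8 + 16*x*y^9 + 4*y^10)) ((117/2)*(x+y)*(x+y)*(x^4+y^4)*(x^6+y^6))); [ppos | field_tac | npos].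
Qed.

Lemma L38 (x y : R) (hx : 0 < x) (hy : 0 < y) : 1/6 * D hP6 hP2 x y <= 2/7 * D hP5 hP3 x y.
Proof.
  prep x y.
  apply (top _ _ (((5/42)*x^13 - (1/3)*x^12*y + (4/7)*x^11*y^2 - (17/42)*x^10*y^3 - (1/6)*x^9*y^4 - (2/7)*x^8*y^5 + (1/2)*x^7*y^6 + (1/2)*x^6*y^7 - (2/7)*x^5*y^8 - (1/6)*x^4*y^9 - (17/42)*x^3*y^10 + (4/7)*x^2*y^11 - (1/3)*x*y^12 + (5/42)*y^13)/((x+y)*(x+y)*(x^2+y^2)*(x^3+y^3)*(x^4+y^4)))); [field_tac|].
  apply (keyP (((5/42)*x^13 - (1/3)*x^12*y + (4/7)*x^11*y^2 - (17/42)*x^10*y^3 - (1/6)*x^9*y^4 - (2/7)*x^8*y^5 + (1/2)*x^7*y^6 + (1/2)*x^6*y^7 - (2/7)*x^5*y^8 - (1/6)*x^4*y^9 - (17/42)*x^3*y^10 + (4/7)*x^2*y^11 - (1/3)*x*y^12 + (5/42)*y^13)/((x+y)*(x+y)*(x^2+y^2)*(x^3+y^3)*(x^4+y^4))) (((x-y)^2)^2*(5*x^9 + 6*x^8*y + 18*x^7*y^2 + 39*x^6*y^3 + 60*x^5*y^4 + 60*x^4*y^5 + 39*x^3*y^6 + 18*x^2*y^7 + 6*x*y^8 + 5*y^9)) (42*(x+y)*(x+y)*(x^2+y^2)*(x^3+y^3)*(x^4+y^4))); [ppos | field_tac | npos].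
Qed.

Lemma L39 (x y : R) (hx : 0 < x) (hy : 0 < y) : 2/9 * D hP5 hP2 x y <= 2/7 * D hP5 hP3 x y.
Proof.
  prep x y.
  apply (top _ _ (((4/63)*x^11 + (4/63)*x^9*y^2 - (22/63)*x^8*y^3 - (2/7)*x^7*y^4 + (32/63)*x^6*y^5 + (32/63)*x^5*y^6 - (2/7)*x^4*y^7 - (22/63)*x^3*y^8 + (4/63)*x^2*y^9 + (4/63)*y^11)/((x+y)*(x+y)*(x^3+y^3)*(x^4+y^4)))); [field_tac|].
  apply (keyP (((4/63)*x^11 + (4/63)*x^9*y^2 - (22/63)*x^8*y^3 - (2/7)*x^7*y^4 + (32/63)*x^6*y^5 + (32/63)*x^5*y^6 - (2/7)*x^4*y^7 - (22/63)*x^3*y^8 + (4/63)*x^2*y^9 + (4/63)*y^11)/((x+y)*(x+y)*(x^3+y^3)*(x^4+y^4))) (((x-y)^2)^2*(2*x^7 + 8*x^6*y + 22*x^5*y^2 + 37*x^4*y^3 + 37*x^3*y^4 + 22*x^2*y^5 + 8*x*y^6 + 2*y^7)) ((63/2)*(x+y)*(x+y)*(x^3+y^3)*(x^4+y^4))); [ppos | field_tac | npos].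
Qed.

Lemma L40 (x y : R) (hx : 0 < x) (hy : 0 < y) : 2/7 * D hP5 hP3 x y <= 4/9 * D hP6 hN2 x y.
Proof.
  prep x y.
  apply (top _ _ ((((10/63)*x^9 + (8/9)*x^8*y - (8/63)*x^7*y^2 + (64/63)*x^6*y^3 + (34/21)*x^5*y^4 + (34/21)*x^4*y^5 + (64/63)*x^3*y^6 - (8/63)*x^2*y^7 + (8/9)*x*y^8 + (10/63)*y^9)/((x+y)*(x+y)*(x^2+y^2)*(x^3+y^3))) - ((2/9)*x + (2/9)*y)*n)); [field_tac|].
  apply (radB n ((x^2+y^2)/2) (((10/63)*x^9 + (8/9)*x^8*y - (8/63)*x^7*y^2 + (64/63)*x^6*y^3 + (34/21)*x^5*y^4 + (34/21)*x^4*y^5 + (64/63)*x^3*y^6 - (8/63)*x^2*y^7 + (8/9)*x*y^8 + (10/63)*y^9)/((x+y)*(x+y)*(x^2+y^2)*(x^3+y^3))) ((2/9)*x + (2/9)*y) (((2/3969)*x^18 + (76/567)*x^17*y + (404/1323)*x^16*y^2 - (3536/3969)*x^15*y^3 + (1922/3969)*x^14*y^4 + (680/3969)*x^13*y^5 - (1394/3969)*x^12*y^6 - (304/441)*x^11*y^7 - (1742/3969)*x^10*y^8 + (10120/3969)*x^9*y^9 - (1742/3969)*x^8*y^10 - (304/441)*x^7*y^11 - (1394/3969)*x^6*y^12 + (680/3969)*x^5*y^13 + (1922/3969)*x^4*y^14 - (3536/3969)*x^3*y^15 + (404/1323)*x^2*y^16 + (76/567)*x*y^17 + (2/3969)*y^18)/((x+y)*(x+y)*(x+y)*(x+y)*(x^2+y^2)*(x^2+y^2)*(x^3+y^3)*(x^3+y^3))));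 [exact hn | exact hn2 | | field_tac |].
   {
  apply (keyP (((10/63)*x^9 + (8/9)*x^8*y - (8/63)*x^7*y^2 + (64/63)*x^6*y^3 + (34/21)*x^5*y^4 + (34/21)*x^4*y^5 + (64/63)*x^3*y^6 - (8/63)*x^2*y^7 + (8/9)*x*y^8 + (10/63)*y^9)/((x+y)*(x+y)*(x^2+y^2)*(x^3+y^3))) ((5*x^10 + 33*x^9*y + 24*x^8*y^2 + 28*x^7*y^3 + 83*x^6*y^4 + 102*x^5*y^5 + 83*x^4*y^6 + 28*x^3*y^7 + 24*x^2*y^8 + 33*x*y^9 + 5*y^10)) ((63/2)*(x+y)*(x+y)*(x^2+y^2)*(x^3+y^3)*(x+y)^1)); [ppos | field_tac | npos].
   }
   {
  apply (keyP (((2/3969)*x^18 + (76/567)*x^17*y + (404/1323)*x^16*y^2 - (3536/3969)*x^15*y^3 + (1922/3969)*x^14*y^4 + (680/3969)*x^13*y^5 - (1394/3969)*x^12*y^6 - (304/441)*x^11*y^7 - (1742/3969)*x^10*y^8 + (10120/3969)*x^9*y^9 - (1742/3969)*x^8*y^10 - (304/441)*x^7*y^11 - (1394/3969)*x^6*y^12 + (680/3969)*x^5*y^13 + (1922/3969)*x^4*y^14 - (3536/3969)*x^3*y^15 + (404/1323)*x^2*y^16 + (76/567)*x*y^17 + (2/3969)*y^18)/((x+y)*(x+y)*(x+y)*(x+y)*(x^2+y^2)*(x^2+y^2)*(x^3+y^3)*(x^3+y^3))) (((x-y)^2)^2*(x^14 + 270*x^13*y + 1680*x^12*y^2 + 3336*x^11*y^3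 + 5304*x^10*y^4 + 7990*x^9*y^5 + 11103*x^8*y^6 + 12984*x^7*y^7 + 11103*x^6*y^8 + 7990*x^5*y^9 + 5304*x^4*y^10 + 3336*x^3*y^11 + 1680*x^2*y^12 + 270*x*y^13 + y^14)) ((3969/2)*(x+y)*(x+y)*(x+y)*(x+y)*(x^2+y^2)*(x^2+y^2)*(x^3+y^3)*(x^3+y^3))); [ppos | field_tac | npos].
   }
Qed.

Lemma L41 (x y : R) (hx : 0 < x) (hy : 0 < y) : 4/9 * D hP6 hN2 x y <= D hP6 hS x y.
Proof.
  prep x y.
  apply (top _ _ (((((5/9)*x^4 + (5/9)*y^4)/((x^2+y^2))) + ((2/9)*x + (2/9)*y)*n) - (1)*s)); [field_tac|].
  apply (radB s ((x^4+y^4)/2) ((((5/9)*x^4 + (5/9)*y^4)/((x^2+y^2))) + ((2/9)*x + (2/9)*y)*n) (1) (((-(1/6)*x^8 + (4/81)*x^7*y - (73/81)*x^6*y^2 + (4/27)*x^5*y^3 - (19/81)*x^4*y^4 + (4/27)*x^3*y^5 - (73/81)*x^2*y^6 + (4/81)*x*y^7 - (1/6)*y^8)/((x^2+y^2)*(x^2+y^2))) + (((20/81)*x^5 + (20/81)*x^4*y + (20/81)*x*y^4 + (20/81)*y^5)/((x^2+y^2)))*n)); [exact hs | exact hs2 | | apply Rminus_diag_uniq; transitivity (((4/81)*x^2 + (8/81)*x*y + (4/81)*y^2)*(n*n - ((x^2+y^2)/2))); [field_tac | rewrite hn2; ring] |].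
   {
  apply (radC n (((5/9)*x^4 + (5/9)*y^4)/((x^2+y^2))) ((2/9)*x + (2/9)*y)); [exact hn | |].
   {
  apply (keyP (((5/9)*x^4 + (5/9)*y^4)/((x^2+y^2))) ((x^4 + y^4)) ((9/5)*(x^2+y^2))); [ppos | field_tac | npos].
   }
   {
  apply (keyP ((2/9)*x + (2/9)*y) ((x + y)) ((9/2))); [ppos | field_tac | npos].
   }
   }
   {
  apply (radA n ((x^2+y^2)/2) ((-(1/6)*x^8 + (4/81)*x^7*y - (73/81)*x^6*y^2 + (4/27)*x^5*y^3 - (19/81)*x^4*y^4 + (4/27)*x^3*y^5 - (73/81)*x^2*y^6 + (4/81)*x*y^7 - (1/6)*y^8)/((x^2+y^2)*(x^2+y^2))) (((20/81)*x^5 + (20/81)*x^4*y + (20/81)*x*y^4 + (20/81)*y^5)/((x^2+y^2))) (((71/26244)*x^16 + (508/6561)*x^15*y - (1187/6561)*x^14*y^2 + (2108/6561)*x^13*y^3 - (482/729)*x^12*y^4 + (4228/6561)*x^11*y^5 - (2585/6561)*x^10*y^6 + (1900/2187)*x^9*y^7 - (17807/13122)*x^8*y^8 + (1900/2187)*x^7*y^9 - (2585/6561)*x^6*y^10 + (4228/6561)*x^5*y^11 - (482/729)*x^4*y^12 + (2108/6561)*x^3*y^13 - (1187/6561)*x^2*y^14 + (508/6561)*x*y^15 + (71/26244)*y^16)/((x^2+y^2)*(x^2+y^2)*(x^2+y^2)*(x^2+y^2)))); [exact hn | exact hn2 | | field_tac |].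
   {
  apply (keyP (((20/81)*x^5 + (20/81)*x^4*y + (20/81)*x*y^4 + (20/81)*y^5)/((x^2+y^2))) ((x^5 + x^4*y + x*y^4 + y^5)) ((81/20)*(x^2+y^2))); [ppos | field_tac | npos].
   }
   {
  apply (keyP (((71/26244)*x^16 + (508/6561)*x^15*y - (1187/6561)*x^14*y^2 + (2108/6561)*x^13*y^3 - (482/729)*x^12*y^4 + (4228/6561)*x^11*y^5 - (2585/6561)*x^10*y^6 + (1900/2187)*x^9*y^7 - (17807/13122)*x^8*y^8 + (1900/2187)*x^7*y^9 - (2585/6561)*x^6*y^10 + (4228/6561)*x^5*y^11 - (482/729)*x^4*y^12 + (2108/6561)*x^3*y^13 - (1187/6561)*x^2*y^14 + (508/6561)*x*y^15 + (71/26244)*y^16)/((x^2+y^2)*(x^2+y^2)*(x^2+y^2)*(x^2+y^2))) (((x-y)^2)^2*(71*x^12 + 2316*x^11*y + 4090*x^10*y^2 + 11180*x^9*y^3 + 12021*x^8*y^4 + 11960*x^7*y^5 + 6004*x^6*y^6 + 11960*x^5*y^7 + 12021*x^4*y^8 + 11180*x^3*y^9 + 4090*x^2*y^10 + 2316*x*y^11 + 71*y^12)) (26244*(x^2+y^2)*(x^2+y^2)*(x^2+y^2)*(x^2+y^2))); [ppos | field_tac | npos].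
   }
   }
Qed.

Lemma L42 (x y : R) (hx : 0 < x) (hy : 0 < y) : D hP6 hS x y <= D hA hG x y.
Proof.
  prep x y.
  apply (top _ _ (((-(1/2)*x^4 - x^3*y + x^2*y^2 - x*y^3 - (1/2)*y^4)/((x^2+y^2))) + (1)*s)); [field_tac|].
  apply (radA s ((x^4+y^4)/2) ((-(1/2)*x^4 - x^3*y + x^2*y^2 - x*y^3 - (1/2)*y^4)/((x^2+y^2))) (1) (((1/4)*x^8 - x^7*y + x^6*y^2 + x^5*y^3 - (5/2)*x^4*y^4 + x^3*y^5 + x^2*y^6 - x*y^7 + (1/4)*y^8)/((x^2+y^2)*(x^2+y^2)))); [exact hs | exact hs2 | | field_tac |].
   {
  apply (keyP (1) ((1)) (1)); [ppos | field_tac | npos].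
   }
   {
  apply (keyP (((1/4)*x^8 - x^7*y + x^6*y^2 + x^5*y^3 - (5/2)*x^4*y^4 + x^3*y^5 + x^2*y^6 - x*y^7 + (1/4)*y^8)/((x^2+y^2)*(x^2+y^2))) (((x-y)^2)^3*(x^2 + 2*x*y + y^2)) (4*(x^2+y^2)*(x^2+y^2))); [ppos | field_tac | npos].
   }
Qed.

Section Conv.
Variables x y : R.
Hypothesis hx : 0 < x.
Hypothesis hy : 0 < y.
Lemma sx : sqrt (x^2) = x. Proof. apply sqrt_pow2; lra. Qed.
Lemma sy : sqrt (y^2) = y. Proof. apply sqrt_pow2; lra. Qed.
Lemma sxy : sqrt (x^2*y^2) = x*y.
Proof. replace (x^2*y^2) with ((x*y)^2) by ring. apply sqrt_pow2; nra. Qed.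
Lemma rp (z : R) : 0 < z -> Rpower (z^2) (3/2) = z^3.
Proof.
  intro hz. rewrite <- (Rpower_pow 2 z hz), Rpower_mult.
  replace (INR 2 * (3/2)) with (INR 3) by (simpl; field).
  apply Rpower_pow; auto.
Qed.
Lemma cH : mH (x^2) (y^2) = hH x y. Proof using hx hy. unfold mH, hH; field_tac. Qed.
Lemma cG : mG (x^2) (y^2) = hG x y. Proof using hx hy. unfold mG, hG; apply sxy. Qed.
Lemma cA : mA (x^2) (y^2) = hA x y. Proof using hx hy. reflexivity. Qed.
Lemma cS : mS (x^2) (y^2) = hS x y. Proof using hx hy. unfold mS, hS; replace ((x^2)^2+(y^2)^2) with (x^4+y^4) by ring; reflexivity. Qed.
Lemma cN1 : mN1 (x^2) (y^2) = hN1 x y. Proof using hx hy. unfold mN1, hN1; rewrite sx, sy; reflexivity. Qed.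
Lemma cN2 : mN2 (x^2) (y^2) = hN2 x y. Proof using hx hy. unfold mN2, hN2; rewrite sx, sy; reflexivity. Qed.
Lemma cN3 : mN3 (x^2) (y^2) = hN3 x y. Proof using hx hy. unfold mN3, hN3; rewrite sxy; reflexivity. Qed.
Lemma cP1 : mP1 (x^2) (y^2) = hP1 x y. Proof using hx hy. unfold mP1, hP1; field_tac. Qed.
Lemma cP2 : mP2 (x^2) (y^2) = hP2 x y. Proof using hx hy. unfold mP2, hP2; field_tac. Qed.
Lemma cP3 : mP3 (x^2) (y^2) = hP3 x y.
Proof. unfold mP3, hP3; rewrite sx, sy, (rp x hx), (rp y hy); reflexivity. Qed.
Lemma cP4 : mP4 (x^2) (y^2) = hP4 x y. Proof using hx hy. unfold mP4, hP4; rewrite sx, sy; field_tac. Qed.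
Lemma cP5 : mP5 (x^2) (y^2) = hP5 x y. Proof using hx hy. unfold mP5, hP5; rewrite sx, sy; reflexivity. Qed.
Lemma cP6 : mP6 (x^2) (y^2) = hP6 x y. Proof using hx hy. unfold mP6, hP6; field_tac. Qed.
End Conv.

Theorem theorem3p1 (a b : R) (ha : 0 < a) (hb : 0 < b) :
  (* (1) *)
  ( (* chain 1 *)
    1/8 * D mP6 mP1 a b <= 1/6 * D mP6 mP2 a b /\
    1/6 * D mP6 mP2 a b <= D mS mA a b /\
    D mS mA a b <= 1/3 * D mS mH a b /\
    1/3 * D mS mH a b <= 1/2 * D mA mH a b /\
    (* chain 2 *)
    1/2 * D mA mH a b <= 4/9 * D mP6 mN2 a b /\
    4/9 * D mP6 mN2 a b <= 1/3 * D mP6 mG a b /\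
    (* chain 3 *)
    1/2 * D mA mH a b <= 3/7 * D mP6 mN3 a b /\
    1/2 * D mA mH a b <= 2/5 * D mS mP4 a b /\
    (* chain 4 *)
    3/7 * D mP6 mN3 a b <= 2/5 * D mP6 mN1 a b /\
    3/7 * D mP6 mN3 a b <= 2/7 * D mP6 mP4 a b /\
    2/5 * D mS mP4 a b <= 2/5 * D mP6 mN1 a b /\
    2/5 * D mS mP4 a b <= 2/7 * D mP6 mP4 a b /\
    (* chain 5 *)
    2/5 * D mP6 mN1 a b <= 1/3 * D mP6 mG a b /\
    2/7 * D mP6 mP4 a b <= 1/3 * D mP6 mG a b /\
    (* chain 6 *)
    1/3 * D mP6 mG a b <= 2/5 * D mP5 mH a b /\
    2/5 * D mP5 mH a b <= 4 * D mN2 mN1 a b /\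
    1/3 * D mP6 mG a b <= 2/3 * D mA mP4 a b /\
    2/3 * D mA mP4 a b <= 4 * D mN2 mN1 a b /\
    (* chain 7 *)
    4 * D mN2 mN1 a b <= 4/3 * D mN2 mG a b /\
    4/3 * D mN2 mG a b <= D mA mG a b /\
    D mA mG a b <= 4 * D mA mN2 a b /\
    4 * D mA mN2 a b <= 2/3 * D mP5 mG a b /\
    2/3 * D mP5 mG a b <= D mP5 mN1 a b /\
    D mP5 mN1 a b <= 6/5 * D mP5 mN3 a b /\
    6/5 * D mP5 mN3 a b <= 4/3 * D mP5 mN2 a b /\
    4/3 * D mP5 mN2 a b <= 2 * D mP5 mA a b ) /\
  (* (2) *)
  ( D mS mA a b <= 4/5 * D mS mN2 a b /\
    4/5 * D mS mN2 a b <= 2/3 * D mS mN1 a b /\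
    D mS mA a b <= 3/4 * D mS mN3 a b /\
    3/4 * D mS mN3 a b <= 2/3 * D mS mN1 a b /\
    2/3 * D mS mN1 a b <= 1/3 * D mP6 mG a b /\
    1/3 * D mP6 mG a b <= 2/5 * D mP5 mH a b /\
    2/3 * D mS mN1 a b <= 1/2 * D mS mG a b /\
    1/2 * D mS mG a b <= 2/5 * D mP5 mH a b ) /\
  (* (3) *)
  ( 1/8 * D mP6 mP1 a b <= 1/6 * D mP6 mP2 a b /\
    1/8 * D mP6 mP1 a b <= 2/9 * D mP5 mP2 a b /\
    2/13 * D mP5 mP1 a b <= 1/6 * D mP6 mP2 a b /\
    2/13 * D mP5 mP1 a b <= 2/9 * D mP5 mP2 a b /\
    1/6 * D mP6 mP2 a b <= 2/7 * D mP5 mP3 a b /\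
    2/9 * D mP5 mP2 a b <= 2/7 * D mP5 mP3 a b /\
    2/7 * D mP5 mP3 a b <= 4/9 * D mP6 mN2 a b /\
    4/9 * D mP6 mN2 a b <= D mP6 mS a b /\
    D mP6 mS a b <= D mA mG a b ).
Proof.
  pose (x := sqrt a); pose (y := sqrt b).
  assert (hx : 0 < x) by (apply sqrt_lt_R0; lra).
  assert (hy : 0 < y) by (apply sqrt_lt_R0; lra).
  assert (ea : a = x^2) by (unfold x; rewrite pow2_sqrt; lra).
  assert (eb : b = y^2) by (unfold y; rewrite pow2_sqrt; lra).
  clearbody x y. subst a b.
  unfold D. rewrite (cH x y hx hy), (cG x y hx hy), (cA x y hx hy), (cS x y hx hy), (cN1 x y hx hy), (cN2 x y hx hy), (cN3 x y hx hy), (cP1 x y hx hy), (cP2 x y hx hy), (cP3 x y hx hy), (cP4 x y hx hy), (cP5 x y hx hy), (cP6 x y hx hy).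
  repeat split.
  - exact (L0 x y hx hy).
  - exact (L1 x y hx hy).
  - exact (L2 x y hx hy).
  - exact (L3 x y hx hy).
  - exact (L4 x y hx hy).
  - exact (L5 x y hx hy).
  - exact (L6 x y hx hy).
  - exact (L7 x y hx hy).
  - exact (L8 x y hx hy).
  - exact (L9 x y hx hy).
  - exact (L10 x y hx hy).
  - exact (L11 x y hx hy).
  - exact (L12 x y hx hy).
  - exact (L13 x y hx hy).
  - exact (L14 x y hx hy).
  - exact (L15 x y hx hy).
  - exact (L16 x y hx hy).
  - exact (L17 x y hx hy).
  - exact (L18 x y hx hy).
  - exact (L19 x y hx hy).
  - exact (L20 x y hx hy).
  - exact (L21 x y hx hy).
  - exact (L22 x y hx hy).
  - exact (L23 x y hx hy).
  - exact (L24 x y hx hy).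
  - exact (L25 x y hx hy).
  - exact (L26 x y hx hy).
  - exact (L27 x y hx hy).
  - exact (L28 x y hx hy).
  - exact (L29 x y hx hy).
  - exact (L30 x y hx hy).
  - exact (L31 x y hx hy).
  - exact (L32 x y hx hy).
  - exact (L33 x y hx hy).
  - exact (L34 x y hx hy).
  - exact (L35 x y hx hy).
  - exact (L36 x y hx hy).
  - exact (L37 x y hx hy).
  - exact (L38 x y hx hy).
  - exact (L39 x y hx hy).
  - exact (L40 x y hx hy).
  - exact (L41 x y hx hy).
  - exact (L42 x y hx hy).
Qed.
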